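(* Let $m\ge2$, $0<h<2^m$ and $k\in\mathbb{Z}_0^m$. Then: the support $\mathrm{supp}\,\tau_k$ is a strictly convex compact $(m-1)$-dimensional body in $\mathbb{H}$; $\tau_k$ is nonnegative and strictly concave on $\mathrm{supp}\,\tau_k$; and $\tau_k$ is continuous on $\mathbb{H}$.
   Context: $s(t)=2\sin(t/2)$; $\mathbb{V}(h)=\{x\in\mathbb{R}^m:|\prod_{j=1}^m s(x_j)|\ge h\}$; $\mathbb{V}_0(h)=\mathbb{V}(h)\cap[0,2\pi]^m$; $\mathbb{V}_k(h)=\mathbb{V}_0(h)+2\pi k$ for $k\in\mathbb{Z}^m$. $\mathbb{Z}_0^m=\{0\}\times\mathbb{Z}^{m-1}$. $\mathcal{E}=(1,\dots,1)$, $\ell(x)=\{x+t\mathcal{E}:t\in\mathbb{R}\}$, and $\mathbb{H}=\{x\in\mathbb{R}^m:\sum_j x_j=0\}$. For $x\in\mathbb{H}$, $\tau_k(x)=\mathrm{mes}_1(\ell(x)\cap\mathbb{V}_k(h))$ (length of the intersection). $\mathrm{supp}\,\tau_k=\{x\in\mathbb{H}:\ell(x)\cap\mathbb{V}_k(h)\ne\emptyset\}$, the orthogonal projection of $\mathbb{V}_k(h)$ onto $\mathbb{H}$. *)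

(* Defs.v *)
From Stdlib Require Import Reals Lra Lia ZArith ClassicalEpsilon.
Open Scope R_scope.

(* Points of R^m are represented by functions nat -> R; only the coordinates
   j < m are meaningful.  [vec m x] says x is the canonical representative
   (coordinates j >= m are 0). *)
Definition vec (m : nat) (x : nat -> R) : Prop :=
  forall j : nat, (m <= j)%nat -> x j = 0.

Fixpoint sumR (m : nat) (f : nat -> R) : R :=
  match m with O => 0 | S n => sumR n f + f n end.

Fixpoint prodR (m : nat) (f : nat -> R) : R :=
  match m with O => 1 | S n => prodR n f * f n end.

Definition p7_dist (m : nat) (x y : nat -> R) : R :=
  sqrt (sumR m (fun j => (x j - y j) ^ 2)).

Definition s (t : R) : R := 2 * sin (t / 2).

Definition V (m : nat) (h : R) (x : nat -> R) : Prop :=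
  Rabs (prodR m (fun j => s (x j))) >= h.

Definition V0 (m : nat) (h : R) (x : nat -> R) : Prop :=
  V m h x /\ (forall j, (j < m)%nat -> 0 <= x j <= 2 * PI).

Definition Vk (m : nat) (h : R) (k : nat -> Z) (y : nat -> R) : Prop :=
  V0 m h (fun j => y j - 2 * PI * IZR (k j)).

Definition Hyp (m : nat) (x : nat -> R) : Prop :=
  vec m x /\ sumR m x = 0.

Definition shift (x : nat -> R) (t : R) : nat -> R := fun j => x j + t.

Definition cover_sum (A : R -> Prop) (l : R) : Prop :=
  exists a b : nat -> R,
    (forall n, a n <= b n) /\
    (forall t, A t -> exists n, a n <= t <= b n) /\
    Un_cv (fun N => sum_f_R0 (fun n => b n - a n) N) l.

Definition p7_is_glb (E : R -> Prop) (v : R) : Prop :=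
  (forall l, E l -> v <= l) /\ (forall w, (forall l, E l -> w <= l) -> w <= v).

Definition lebesgue1 (A : R -> Prop) : R :=
  epsilon (inhabits 0) (fun v => p7_is_glb (cover_sum A) v).

(* tau_k(x) = mes_1(l(x) /\ V_k(h)); the line l(x) is parametrised by
   t |-> x + tE, which has speed |E| = sqrt m, hence the factor sqrt m. *)
Definition tau (m : nat) (h : R) (k : nat -> Z) (x : nat -> R) : R :=
  sqrt (INR m) * lebesgue1 (fun t => Vk m h k (shift x t)).

Definition supp_tau (m : nat) (h : R) (k : nat -> Z) (x : nat -> R) : Prop :=
  Hyp m x /\ exists t : R, Vk m h k (shift x t).

Definition comb (l : R) (x y : nat -> R) : nat -> R :=
  fun j => l * x j + (1 - l) * y j.

Definition p7_rel_interior (m : nat) (S : (nat -> R) -> Prop) (x : nat -> R) : Prop :=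
  S x /\ exists eps, eps > 0 /\
    forall y, Hyp m y -> p7_dist m x y < eps -> S y.

Definition p7_convex (S : (nat -> R) -> Prop) : Prop :=
  forall x y l, S x -> S y -> 0 <= l <= 1 -> S (comb l x y).

Definition p7_strictly_convex (m : nat) (S : (nat -> R) -> Prop) : Prop :=
  p7_convex S /\
  forall x y l, S x -> S y -> x <> y -> 0 < l < 1 ->
    p7_rel_interior m S (comb l x y).

Definition p7_seq_converges (m : nat) (u : nat -> nat -> R) (x : nat -> R) : Prop :=
  forall eps, eps > 0 -> exists N, forall n, (n >= N)%nat -> p7_dist m (u n) x < eps.

Definition p7_compact (m : nat) (S : (nat -> R) -> Prop) : Prop :=
  forall u : nat -> nat -> R, (forall n, S (u n)) ->
    exists (phi : nat -> nat) (x : nat -> R),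
      (forall n, (phi n < phi (Datatypes.S n))%nat) /\ S x /\
      p7_seq_converges m (fun n => u (phi n)) x.

(* (m-1)-dimensional body in H: subset of H with nonempty interior
   relative to H *)
Definition p7_full_dim_in_H (m : nat) (S : (nat -> R) -> Prop) : Prop :=
  (forall x, S x -> Hyp m x) /\ exists x, p7_rel_interior m S x.

Definition p7_strictly_concave_on (m : nat) (S : (nat -> R) -> Prop)
  (f : (nat -> R) -> R) : Prop :=
  forall x y l, S x -> S y -> x <> y -> 0 < l < 1 ->
    f (comb l x y) > l * f x + (1 - l) * f y.

Definition p7_continuous_on_H (m : nat) (f : (nat -> R) -> R) : Prop :=
  forall x, Hyp m x -> forall eps, eps > 0 -> exists delta, delta > 0 /\
    forall y, Hyp m y -> p7_dist m x y < delta -> Rabs (f y - f x) < eps.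

(* Main.v *)
Require Import Defs.
From Stdlib Require Import Reals Lra Lia ZArith List ClassicalEpsilon Classical FunctionalExtensionality.
Open Scope R_scope.

Lemma Rabs_le_inv a b : Rabs a <= b -> - b <= a <= b.
Proof. intros H. destruct (Rle_or_lt 0 a); [rewrite Rabs_right in H by lra| rewrite Rabs_left in H by lra]; lra. Qed.


Fixpoint lsum {I : Type} (A B : I -> R) (L : list I) : R :=
  match L with nil => 0 | i :: L' => (B i - A i) + lsum A B L' end.

Lemma lsum_app {I} (A B : I -> R) L1 L2 :
  lsum A B (L1 ++ L2) = lsum A B L1 + lsum A B L2.
Proof. induction L1; simpl; [lra| rewrite IHL1; lra]. Qed.

Lemma lsum_nonneg {I} (A B : I -> R) L : (forall i, A i <= B i) -> 0 <= lsum A B L.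
Proof. intros H; induction L; simpl; [lra| specialize (H a); lra]. Qed.

Lemma cover_list {I : Type} (A B : I -> R) (HAB : forall i, A i <= B i) :
  forall n (L : list I) a b, (length L <= n)%nat -> a <= b ->
  (forall t, a <= t <= b -> exists i, In i L /\ A i < t < B i) ->
  b - a <= lsum A B L.
Proof.
  induction n as [|n IH]; intros L a b HL Hab Hc.
  - destruct L; [|simpl in HL; lia].
    destruct (Hc b) as [i [Hi _]]; [lra| destruct Hi].
  - destruct (Hc b) as [i [Hi Hib]]; [lra|].
    destruct (in_split _ _ Hi) as [L1 [L2 HL12]]; subst L.
    rewrite lsum_app; simpl.
    assert (Hn1 := lsum_nonneg A B L1 HAB). assert (Hn2 := lsum_nonneg A B L2 HAB).
    destruct (Rlt_or_le (A i) a) as [Hlt|Hle].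
    + lra.
    + assert (IH' : A i - a <= lsum A B (L1 ++ L2)).
      { apply IH; [rewrite length_app in *; simpl in HL; lia| lra|].
        intros t Ht. destruct (Hc t) as [j [Hj Hjt]]; [lra|].
        exists j; split; [|exact Hjt].
        apply in_app_or in Hj; apply in_or_app; destruct Hj as [Hj|[Hj|Hj]]; auto.
        subst j; lra. }
      rewrite lsum_app in IH'. lra.
Qed.

Lemma lsum_seq (A B : nat -> R) N :
  lsum A B (seq 0 (S N)) = sum_f_R0 (fun n => B n - A n) N.
Proof.
  induction N.
  - simpl; lra.
  - rewrite seq_S, lsum_app, IHN. simpl. lra.
Qed.

Lemma geom_half N : sum_f_R0 (fun n => (/2)^n) N = 2 - (/2)^N.
Proof. induction N; simpl; [lra|]. rewrite IHN. lra. Qed.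

Lemma sum_f_ext (f g : nat -> R) N : (forall n, f n = g n) -> sum_f_R0 f N = sum_f_R0 g N.
Proof. intros H; induction N; simpl; rewrite ?IHN, ?H; reflexivity. Qed.

Lemma sum_f_plus (f g : nat -> R) N : sum_f_R0 (fun n => f n + g n) N = sum_f_R0 f N + sum_f_R0 g N.
Proof. induction N; simpl; [lra| rewrite IHN; lra]. Qed.

Lemma sum_f_scal (f : nat -> R) c N : sum_f_R0 (fun n => c * f n) N = c * sum_f_R0 f N.
Proof. induction N; simpl; [lra| rewrite IHN; lra]. Qed.

Lemma finite_bound (l : list R) : exists N, forall r, In r l -> forall n, r = INR n -> (n <= N)%nat.
Proof.
  induction l as [|r l [N HN]].
  - exists 0%nat; intros r [].
  - destruct (classic (exists n, r = INR n)) as [[n0 Hn0]|Hno].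
    + exists (Nat.max n0 N); intros r' [Hr|Hr] n Hn.
      * subst r'. rewrite Hn0 in Hn. apply INR_eq in Hn. lia.
      * specialize (HN r' Hr n Hn). lia.
    + exists N; intros r' [Hr|Hr] n Hn.
      * subst r'. exfalso; apply Hno; eauto.
      * eauto.
Qed.

Lemma cover_lower (A : R -> Prop) a b : a <= b -> (forall t, a <= t <= b -> A t) ->
  forall l, cover_sum A l -> b - a <= l.
Proof.
  intros Hab HA l [an [bn [Hle [Hcov Hcv]]]].
  destruct (Rle_or_lt (b - a) l) as [|Hlt]; [assumption| exfalso].
  set (eps := b - a - l).
  assert (Heps : 0 < eps) by (unfold eps; lra).
  set (al := fun n => an n - eps / 8 * (/2)^n).
  set (be := fun n => bn n + eps / 8 * (/2)^n).
  assert (Hpw : forall n, 0 < (/2)^n) by (intro; apply pow_lt; lra).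
  assert (Hab' : forall i, al i <= be i).
  { intro i; unfold al, be; specialize (Hle i); specialize (Hpw i); nra. }
  set (fam := mkfamily (fun r => exists n : nat, r = INR n)
                (fun r y => exists n : nat, r = INR n /\ al n < y < be n)
                (fun r H => match H with ex_intro _ y (ex_intro _ n (conj e _)) => ex_intro _ n e end)).
  assert (Hcomp := compact_P3 a b fam).
  destruct Hcomp as [D [HDc [lst HDl]]].
  - split.
    + intros t Ht. destruct (Hcov t (HA t Ht)) as [n Hn].
      exists (INR n); simpl; exists n; split; [reflexivity|].
      specialize (Hpw n); unfold al, be; nra.
    + intros r y [n [Hr Hy]].
      assert (Hd : 0 < Rmin (y - al n) (be n - y)) by (apply Rmin_pos; lra).
      exists (mkposreal _ Hd); intros z Hz; unfold disc in Hz; simpl in Hz.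
      exists n; split; [exact Hr|].
      assert (H1 := Rmin_l (y - al n) (be n - y)); assert (H2 := Rmin_r (y - al n) (be n - y)).
      apply Rabs_def2 in Hz; lra.
  - destruct (finite_bound lst) as [N HN].
    assert (Hb : b - a <= lsum al be (seq 0 (S N))).
    { apply (cover_list al be Hab' (length (seq 0 (S N)))); [lia| assumption|].
      intros t Ht. destruct (HDc t Ht) as [r [[n [Hr Hn]] HDr]].
      exists n; split; [|exact Hn].
      assert (Hin : In r lst) by (apply HDl; split; [exists n; exact Hr| exact HDr]).
      apply in_seq. specialize (HN r Hin n Hr); lia. }
    rewrite lsum_seq in Hb.
    assert (E : sum_f_R0 (fun n => be n - al n) N
              = sum_f_R0 (fun n => bn n - an n) N + eps / 4 * sum_f_R0 (fun n => (/2)^n) N).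
    { rewrite <- sum_f_scal, <- sum_f_plus. apply sum_f_ext; intro n; unfold al, be; lra. }
    rewrite E, geom_half in Hb.
    assert (Hgr : Un_growing (fun N => sum_f_R0 (fun n => bn n - an n) N)).
    { intro n; simpl; specialize (Hle (S n)); lra. }
    assert (Hl := growing_ineq _ _ Hgr Hcv N).
    specialize (Hpw N). unfold eps in *; nra.
Qed.

Lemma glb_unique E v w : p7_is_glb E v -> p7_is_glb E w -> v = w.
Proof. intros [H1 H2] [H3 H4]. apply Rle_antisym; [apply H4, H1 | apply H2, H3]. Qed.

Lemma lebesgue1_spec A v : p7_is_glb (cover_sum A) v -> lebesgue1 A = v.
Proof.
  intros H. unfold lebesgue1.
  apply (glb_unique (cover_sum A)); [|exact H].
  apply (epsilon_spec (inhabits 0) (fun v => p7_is_glb (cover_sum A) v)). eauto.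
Qed.

Lemma sum_single (c : R) N :
  sum_f_R0 (fun n => (match n with O => c | S _ => 0 end) - 0) N = c.
Proof. induction N; simpl; [lra|]. rewrite IHN; lra. Qed.

Lemma lebesgue_interval (A : R -> Prop) a b : a <= b -> (forall t, A t <-> a <= t <= b) ->
  lebesgue1 A = b - a.
Proof.
  intros Hab HA. apply lebesgue1_spec. split.
  - apply cover_lower; [assumption| intros; apply HA; assumption].
  - intros w Hw. apply Hw.
    exists (fun n => match n with O => a | S _ => 0 end), (fun n => match n with O => b | S _ => 0 end).
    split; [intros [|n]; lra|]. split.
    + intros t Ht; exists O; apply HA; exact Ht.
    + intros eps Heps; exists O; intros n _. unfold Rdist.
      rewrite (sum_f_ext _ (fun n => (match n with O => b - a | S _ => 0 end) - 0)).
      * rewrite sum_single. rewrite Rminus_diag, Rabs_R0; lra.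
      * intros [|k]; lra.
Qed.

Lemma lebesgue_empty (A : R -> Prop) : (forall t, ~ A t) -> lebesgue1 A = 0.
Proof.
  intros HA. apply lebesgue1_spec. split.
  - intros l [an [bn [Hle [_ Hcv]]]].
    assert (Hgr : Un_growing (fun N => sum_f_R0 (fun n => bn n - an n) N)).
    { intro n; simpl; specialize (Hle (S n)); lra. }
    assert (Hl := growing_ineq _ _ Hgr Hcv 0). simpl in Hl. specialize (Hle O); lra.
  - intros w Hw. apply Hw.
    exists (fun _ => 0), (fun _ => 0). split; [intros; lra|]. split.
    + intros t Ht; exfalso; exact (HA t Ht).
    + intros eps Heps; exists O; intros n _. unfold Rdist.
      rewrite (sum_f_ext _ (fun n => (match n with O => 0 | S _ => 0 end) - 0)).
      * rewrite sum_single. rewrite Rminus_diag, Rabs_R0; lra.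
      * intros [|k]; lra.
Qed.


Definition q (w : R) : R :=
  if Rle_dec 0 w then if Rle_dec w (2*PI) then 2 * sin (w/2) else 0 else 0.

Definition Q (m : nat) (w : nat -> R) : R := prodR m (fun j => q (w j)).

Lemma q_in w : 0 <= w <= 2*PI -> q w = 2 * sin (w/2).
Proof. intros [H1 H2]; unfold q; destruct (Rle_dec 0 w); destruct (Rle_dec w (2*PI)); lra. Qed.

Lemma q_out w : w < 0 \/ 2*PI < w -> q w = 0.
Proof. intros H; unfold q; destruct (Rle_dec 0 w); destruct (Rle_dec w (2*PI)); lra. Qed.

Lemma sin_half_nonneg w : 0 <= w <= 2*PI -> 0 <= sin (w/2).
Proof. intros; apply sin_ge_0; lra. Qed.

Lemma q_bound w : 0 <= q w <= 2.
Proof.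
  destruct (Rle_dec 0 w); destruct (Rle_dec w (2*PI)).
  - rewrite q_in by lra. assert (H := sin_half_nonneg w). assert (H2 := SIN_bound (w/2)). lra.
  - rewrite q_out by lra; lra.
  - rewrite q_out by lra; lra.
  - rewrite q_out by lra; lra.
Qed.

Lemma q_pos w : 0 < q w -> 0 < w < 2*PI.
Proof.
  intros H. destruct (Rle_dec 0 w); destruct (Rle_dec w (2*PI)); try (rewrite q_out in H; lra).
  rewrite q_in in H by lra.
  destruct (Req_dec w 0) as [->|]; [rewrite Rdiv_0_l, sin_0 in H; lra|].
  destruct (Req_dec w (2*PI)) as [->|]; [replace (2*PI/2) with PI in H by field; rewrite sin_PI in H; lra|].
  lra.
Qed.

Lemma q_pos' w : 0 < w < 2*PI -> 0 < q w.
Proof. intros H; rewrite q_in by lra. assert (0 < sin (w/2)) by (apply sin_gt_0; lra). lra. Qed.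

Lemma sin_lip a b : Rabs (sin a - sin b) <= Rabs (a - b).
Proof.
  destruct (Rtotal_order a b) as [H|[H|H]].
  - destruct (MVT_cor2 sin cos a b H) as [c [Hc _]]; [intros; apply derivable_pt_lim_sin|].
    replace (sin a - sin b) with (- (sin b - sin a)) by ring. rewrite Rabs_Ropp, Hc, Rabs_mult.
    replace (a - b) with (-(b - a)) by ring. rewrite Rabs_Ropp.
    assert (Hc1 := COS_bound c). assert (Rabs (cos c) <= 1) by (apply Rabs_le; lra).
    assert (0 <= Rabs (b - a)) by apply Rabs_pos. nra.
  - subst; rewrite !Rminus_diag, Rabs_R0; lra.
  - destruct (MVT_cor2 sin cos b a H) as [c [Hc _]]; [intros; apply derivable_pt_lim_sin|].
    rewrite Hc, Rabs_mult.
    assert (Hc1 := COS_bound c). assert (Rabs (cos c) <= 1) by (apply Rabs_le; lra).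
    assert (0 <= Rabs (a - b)) by apply Rabs_pos. nra.
Qed.

Lemma sin_le_x x : 0 <= x -> sin x <= x.
Proof. intros H; destruct (Req_dec x 0) as [->|]; [rewrite sin_0; lra| left; apply sin_lt_x; lra]. Qed.

Lemma q_edge w w' : 0 <= w <= 2*PI -> (w' < 0 \/ 2*PI < w') -> q w <= Rabs (w - w').
Proof.
  intros Hw Hw'. rewrite q_in by lra.
  destruct Hw' as [Hw'|Hw'].
  - assert (H := sin_le_x (w/2) ltac:(lra)). rewrite Rabs_right by lra. lra.
  - rewrite <- sin_PI_x. assert (H := sin_le_x (PI - w/2) ltac:(lra)).
    rewrite Rabs_left by lra. lra.
Qed.

Lemma q_lip w w' : Rabs (q w - q w') <= Rabs (w - w').
Proof.
  assert (Hb := q_bound w); assert (Hb' := q_bound w').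
  destruct (Rle_dec 0 w); destruct (Rle_dec w (2*PI));
  destruct (Rle_dec 0 w'); destruct (Rle_dec w' (2*PI)).
  all: try (rewrite (q_out w) by lra; rewrite (q_out w') by lra; rewrite Rminus_diag, Rabs_R0; apply Rabs_pos).
  - rewrite !q_in by lra. rewrite <- Rmult_minus_distr_l, Rabs_mult, Rabs_right by lra.
    assert (H := sin_lip (w/2) (w'/2)). replace (w/2 - w'/2) with ((w - w')/2) in H by field.
    unfold Rdiv in H; rewrite Rabs_mult in H. rewrite (Rabs_right (/2)) in H by lra. lra.
  - rewrite (q_out w') by lra. rewrite Rminus_0_r, Rabs_right by lra. apply q_edge; lra.
  - rewrite (q_out w') by lra. rewrite Rminus_0_r, Rabs_right by lra. apply q_edge; lra.
  - rewrite (q_out w) by lra. rewrite Rminus_0_l, Rabs_Ropp, Rabs_right by lra.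
    rewrite Rabs_minus_sym. apply q_edge; lra.
  - rewrite (q_out w) by lra. rewrite Rminus_0_l, Rabs_Ropp, Rabs_right by lra.
    rewrite Rabs_minus_sym. apply q_edge; lra.
Qed.

Lemma prod_q_nonneg n w : 0 <= Q n w.
Proof. unfold Q; induction n; simpl; [lra|]. assert (H := q_bound (w n)). nra. Qed.

Lemma Q_lip n w w' : Rabs (Q n w - Q n w') <= 2^n * sumR n (fun j => Rabs (w j - w' j)).
Proof.
  unfold Q; induction n; simpl.
  - rewrite Rminus_diag, Rabs_R0; lra.
  - set (P := prodR n (fun j => q (w j))) in *. set (P' := prodR n (fun j => q (w' j))) in *.
    replace (P * q (w n) - P' * q (w' n)) with (P * (q (w n) - q (w' n)) + (P - P') * q (w' n)) by ring.
    assert (HP : Rabs P <= 2^n).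
    { unfold P; clear; induction n; simpl; [rewrite Rabs_R1; lra|].
      rewrite Rabs_mult. assert (H := q_bound (w n)). rewrite (Rabs_right (q _)) by lra.
      assert (0 <= Rabs (prodR n (fun j => q (w j)))) by apply Rabs_pos. nra. }
    assert (Hq := q_lip (w n) (w' n)). assert (Hb := q_bound (w' n)).
    eapply Rle_trans; [apply Rabs_triang|]. rewrite !Rabs_mult.
    rewrite (Rabs_right (q (w' n))) by lra.
    assert (0 <= Rabs P) by apply Rabs_pos. assert (0 <= Rabs (P - P')) by apply Rabs_pos.
    assert (0 <= Rabs (q (w n) - q (w' n))) by apply Rabs_pos.
    assert (Hs : 0 <= sumR n (fun j => Rabs (w j - w' j))).
    { clear; induction n; simpl; [lra|]. assert (0 <= Rabs (w n - w' n)) by apply Rabs_pos; lra. }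
    assert (0 < 2^n) by (apply pow_lt; lra).
    assert (A1 : Rabs P * Rabs (q (w n) - q (w' n)) <= 2^n * Rabs (w n - w' n)).
    { apply Rmult_le_compat; lra. }
    assert (A2 : Rabs (P - P') * q (w' n) <= 2^n * sumR n (fun j => Rabs (w j - w' j)) * 2).
    { apply Rmult_le_compat; lra. }
    nra.
Qed.

Lemma prodR_ext n f g : (forall j, (j < n)%nat -> f j = g j) -> prodR n f = prodR n g.
Proof. induction n; intros H; simpl; [reflexivity|]. rewrite H by lia; rewrite IHn; [reflexivity| intros; apply H; lia]. Qed.

Lemma sumR_ext n f g : (forall j, (j < n)%nat -> f j = g j) -> sumR n f = sumR n g.
Proof. induction n; intros H; simpl; [reflexivity|]. rewrite H by lia; rewrite IHn; [reflexivity| intros; apply H; lia]. Qed.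

Lemma Q_pos_coord n w : 0 < Q n w -> forall j, (j < n)%nat -> 0 < q (w j).
Proof.
  unfold Q; induction n; intros H j Hj; [lia|]. simpl in H.
  assert (H0 := prod_q_nonneg n w). unfold Q in H0. assert (H1 := q_bound (w n)).
  assert (0 < prodR n (fun j => q (w j))) by (destruct H0 as [H0|H0]; [exact H0| rewrite <- H0 in H; lra]).
  assert (0 < q (w n)) by (destruct (proj1 H1) as [H3|H3]; [exact H3| rewrite <- H3 in H; lra]).
  destruct (Nat.eq_dec j n) as [->|]; [assumption|]. apply IHn; [assumption| lia].
Qed.

Lemma V0_Q m h w : 0 < h -> (V0 m h w <-> Q m w >= h).
Proof.
  intros Hh; split.
  - intros [HV Hd]. unfold V in HV.
    assert (E : prodR m (fun j => s (w j)) = Q m w).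
    { unfold Q; apply prodR_ext; intros j Hj; rewrite q_in by (apply Hd; exact Hj); reflexivity. }
    rewrite E in HV. rewrite Rabs_right in HV; [exact HV| apply Rle_ge, prod_q_nonneg].
  - intros HQ. assert (Hc := Q_pos_coord m w ltac:(lra)).
    assert (Hd : forall j, (j < m)%nat -> 0 <= w j <= 2*PI) by (intros j Hj; specialize (Hc j Hj); apply q_pos in Hc; lra).
    split; [|exact Hd]. unfold V.
    assert (E : prodR m (fun j => s (w j)) = Q m w).
    { unfold Q; apply prodR_ext; intros j Hj; rewrite q_in by (apply Hd; exact Hj); reflexivity. }
    rewrite E, Rabs_right; [exact HQ| apply Rle_ge, prod_q_nonneg].
Qed.


Definition psi (u : R) : R := ln (2 * sin (u/2)).
Definition dpsi (u : R) : R := cos (u/2) / (2 * sin (u/2)).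

Lemma psi_deriv u : 0 < u < 2*PI -> derivable_pt_lim psi u (dpsi u).
Proof.
  intros Hu.
  assert (Hs : 0 < sin (u/2)) by (apply sin_gt_0; lra).
  assert (H1 : derivable_pt_lim (fun x => x / 2) u (/2)).
  { assert (H := derivable_pt_lim_scal id (/2) u 1 (derivable_pt_lim_id u)).
    unfold mult_real_fct, id in H. replace (/2 * 1) with (/2) in H by ring.
    intros e He; destruct (H e He) as [d Hd]; exists d; intros h Hh0 Hh.
    specialize (Hd h Hh0 Hh). replace ((u + h)/2) with (/2 * (u+h)) by field.
    replace (u/2) with (/2 * u) by field. exact Hd. }
  assert (H2 := derivable_pt_lim_comp (fun x => x/2) sin u (/2) (cos (u/2)) H1 (derivable_pt_lim_sin _)).
  assert (H3 := derivable_pt_lim_scal _ 2 u _ H2).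
  assert (H4 := derivable_pt_lim_comp _ ln u _ _ H3 (derivable_pt_lim_ln (mult_real_fct 2 (comp sin (fun x => x/2)) u) ltac:(unfold mult_real_fct, comp; lra))).
  unfold psi, dpsi.
  replace (cos (u/2) / (2 * sin (u/2))) with (/ mult_real_fct 2 (comp sin (fun x => x/2)) u * (2 * (cos (u/2) * /2))).
  - exact H4.
  - unfold mult_real_fct, comp. field. lra.
Qed.

Lemma dpsi_decr u v : 0 < u -> u < v -> v < 2*PI -> dpsi v < dpsi u.
Proof.
  intros H1 H2 H3. unfold dpsi.
  assert (Hu : 0 < sin (u/2)) by (apply sin_gt_0; lra).
  assert (Hv : 0 < sin (v/2)) by (apply sin_gt_0; lra).
  assert (Hd : 0 < sin (v/2 - u/2)) by (apply sin_gt_0; lra).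
  rewrite sin_minus in Hd.
  apply (Rmult_lt_reg_r (2 * sin (u/2) * (2 * sin (v/2)))); [nra|].
  unfold Rdiv. field_simplify; [nra| lra| lra].
Qed.

Lemma strict_core (f f' : R -> R) a b :
  (forall u, a < u < b -> derivable_pt_lim f u (f' u)) ->
  (forall u v, a < u -> u < v -> v < b -> f' v < f' u) ->
  forall u v l, a < u -> u < v -> v < b -> 0 < l < 1 ->
  f (l * u + (1 - l) * v) > l * f u + (1 - l) * f v.
Proof.
  intros Hd Hdec u v l H1 H2 H3 Hl.
  set (c := l * u + (1 - l) * v).
  assert (Hc1 : u < c) by (unfold c; nra). assert (Hc2 : c < v) by (unfold c; nra).
  destruct (MVT_cor2 f f' u c Hc1) as [x1 [E1 Hx1]]; [intros; apply Hd; lra|].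
  destruct (MVT_cor2 f f' c v Hc2) as [x2 [E2 Hx2]]; [intros; apply Hd; lra|].
  assert (Hlt : f' x2 < f' x1) by (apply Hdec; lra).
  assert (Ec1 : c - u = (1 - l) * (v - u)) by (unfold c; ring).
  assert (Ec2 : v - c = l * (v - u)) by (unfold c; ring).
  rewrite Ec1 in E1; rewrite Ec2 in E2.
  assert (Hp : 0 < l * (1 - l) * (v - u)) by (apply Rmult_lt_0_compat; [nra| lra]).
  assert (K : l * (f c - f u) - (1 - l) * (f v - f c) = l * (1 - l) * (v - u) * (f' x1 - f' x2)).
  { rewrite E1, E2; ring. }
  assert (0 < l * (1 - l) * (v - u) * (f' x1 - f' x2)) by (apply Rmult_lt_0_compat; lra).
  lra.
Qed.

Lemma psi_sconc u v l : 0 < u < 2*PI -> 0 < v < 2*PI -> u <> v -> 0 < l < 1 ->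
  psi (l * u + (1 - l) * v) > l * psi u + (1 - l) * psi v.
Proof.
  intros Hu Hv Huv Hl.
  destruct (Rlt_or_le u v) as [H|H].
  - apply (strict_core psi dpsi 0 (2*PI)); try lra.
    + intros; apply psi_deriv; lra.
    + intros; apply dpsi_decr; lra.
  - replace (l * u + (1 - l) * v) with ((1 - l) * v + (1 - (1 - l)) * u) by ring.
    replace (l * psi u + (1 - l) * psi v) with ((1 - l) * psi v + (1 - (1 - l)) * psi u) by ring.
    apply (strict_core psi dpsi 0 (2*PI)); try lra.
    + intros; apply psi_deriv; lra.
    + intros; apply dpsi_decr; lra.
Qed.

Lemma psi_conc u v l : 0 < u < 2*PI -> 0 < v < 2*PI -> 0 <= l <= 1 ->
  psi (l * u + (1 - l) * v) >= l * psi u + (1 - l) * psi v.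
Proof.
  intros Hu Hv Hl.
  destruct (Req_dec u v) as [<-|Huv].
  - replace (l * u + (1 - l) * u) with u by ring. right; ring.
  - destruct (Req_dec l 0) as [->|]; [replace (0 * u + (1 - 0) * v) with v by ring; right; ring|].
    destruct (Req_dec l 1) as [->|]; [replace (1 * u + (1 - 1) * v) with u by ring; right; ring|].
    left; apply psi_sconc; lra.
Qed.

Lemma Q_exp n w : (forall j, (j < n)%nat -> 0 < w j < 2*PI) ->
  Q n w = exp (sumR n (fun j => psi (w j))).
Proof.
  unfold Q; induction n; intros H; simpl; [rewrite exp_0; reflexivity|].
  rewrite exp_plus, IHn by (intros; apply H; lia).
  f_equal. unfold psi. rewrite exp_ln.
  - apply q_in; specialize (H n ltac:(lia)); lra.
  - specialize (H n ltac:(lia)). assert (0 < sin (w n / 2)) by (apply sin_gt_0; lra). lra.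
Qed.

Lemma sumR_le n f g : (forall j, (j < n)%nat -> f j <= g j) -> sumR n f <= sumR n g.
Proof. induction n; intros H; simpl; [lra|]. assert (f n <= g n) by (apply H; lia).
  assert (sumR n f <= sumR n g) by (apply IHn; intros; apply H; lia). lra. Qed.

Lemma sumR_lt n f g : (forall j, (j < n)%nat -> f j <= g j) -> (exists j, (j < n)%nat /\ f j < g j) ->
  sumR n f < sumR n g.
Proof.
  induction n; intros H [j [Hj Hlt]]; [lia|]. simpl.
  destruct (Nat.eq_dec j n) as [->|Hne].
  - assert (sumR n f <= sumR n g) by (apply sumR_le; intros; apply H; lia). lra.
  - assert (f n <= g n) by (apply H; lia).
    assert (sumR n f < sumR n g) by (apply IHn; [intros; apply H; lia| exists j; split; [lia| exact Hlt]]). lra.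
Qed.

Lemma sumR_lin n f g a b : sumR n (fun j => a * f j + b * g j) = a * sumR n f + b * sumR n g.
Proof. induction n; simpl; [ring| rewrite IHn; ring]. Qed.

Lemma Q_dom n w c : 0 < c -> Q n w >= c -> forall j, (j < n)%nat -> 0 < w j < 2*PI.
Proof. intros Hc HQ j Hj. apply q_pos. apply (Q_pos_coord n w); [lra| exact Hj]. Qed.

Lemma Q_sum_ge n w c : 0 < c -> Q n w >= c -> sumR n (fun j => psi (w j)) >= ln c.
Proof.
  intros Hc HQ. rewrite (Q_exp n w (Q_dom n w c Hc HQ)) in HQ.
  destruct (Rle_or_lt (ln c) (sumR n (fun j => psi (w j)))) as [H|H]; [lra|].
  apply exp_increasing in H. rewrite exp_ln in H by lra. lra.
Qed.

Lemma Q_conc_gen n w w' c l : 0 < c -> Q n w >= c -> Q n w' >= c -> 0 <= l <= 1 ->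
  (forall j, (j < n)%nat -> 0 < comb l w w' j < 2*PI) /\
  sumR n (fun j => psi (comb l w w' j)) >= l * sumR n (fun j => psi (w j)) + (1 - l) * sumR n (fun j => psi (w' j)).
Proof.
  intros Hc H1 H2 Hl.
  assert (D1 := Q_dom n w c Hc H1). assert (D2 := Q_dom n w' c Hc H2).
  split.
  - intros j Hj. specialize (D1 j Hj); specialize (D2 j Hj). unfold comb.
    assert (0 <= l * w j) by (apply Rmult_le_pos; lra). assert (0 <= (1-l) * w' j) by (apply Rmult_le_pos; lra).
    assert (l * w j <= l * (2*PI)) by (apply Rmult_le_compat_l; lra).
    assert ((1-l) * w' j <= (1-l) * (2*PI)) by (apply Rmult_le_compat_l; lra).
    destruct (Req_dec l 0) as [->|Hl0]; [lra|].
    assert (0 < l * w j) by (apply Rmult_lt_0_compat; lra).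
    assert (l * w j < l * (2*PI)) by (apply Rmult_lt_compat_l; lra). lra.
  - rewrite <- sumR_lin. apply Rle_ge, sumR_le. intros j Hj. apply Rge_le. unfold comb.
    apply psi_conc; auto.
Qed.

Lemma Q_conc n w w' c l : 0 < c -> Q n w >= c -> Q n w' >= c -> 0 <= l <= 1 ->
  Q n (comb l w w') >= c.
Proof.
  intros Hc H1 H2 Hl. destruct (Q_conc_gen n w w' c l Hc H1 H2 Hl) as [D E].
  assert (S1 := Q_sum_ge n w c Hc H1). assert (S2 := Q_sum_ge n w' c Hc H2).
  rewrite (Q_exp n _ D).
  assert (ln c <= sumR n (fun j => psi (comb l w w' j))) by nra.
  destruct H as [H|H].
  - apply exp_increasing in H. rewrite exp_ln in H by lra. lra.
  - rewrite <- H, exp_ln by lra. lra.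
Qed.

Lemma Q_sconc n w w' c l : 0 < c -> Q n w >= c -> Q n w' >= c -> 0 < l < 1 ->
  (exists j, (j < n)%nat /\ w j <> w' j) ->
  Q n (comb l w w') > c.
Proof.
  intros Hc H1 H2 Hl Hne. destruct (Q_conc_gen n w w' c l Hc H1 H2 ltac:(lra)) as [D _].
  assert (D1 := Q_dom n w c Hc H1). assert (D2 := Q_dom n w' c Hc H2).
  assert (S1 := Q_sum_ge n w c Hc H1). assert (S2 := Q_sum_ge n w' c Hc H2).
  assert (E : sumR n (fun j => psi (comb l w w' j)) > l * sumR n (fun j => psi (w j)) + (1 - l) * sumR n (fun j => psi (w' j))).
  { rewrite <- sumR_lin. apply sumR_lt.
    - intros j Hj. apply Rge_le. unfold comb. apply psi_conc; auto; lra.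
    - destruct Hne as [j [Hj Hne]]. exists j; split; [exact Hj|]. unfold comb.
      apply psi_sconc; auto. }
  rewrite (Q_exp n _ D).
  assert (H : ln c < sumR n (fun j => psi (comb l w w' j))) by nra.
  apply exp_increasing in H. rewrite exp_ln in H by lra. lra.
Qed.


Definition Wv (k : nat -> Z) (x : nat -> R) (t : R) : nat -> R := fun j => x j + t - 2*PI*IZR (k j).

Lemma Vk_iff m h k x t : 0 < h -> (Vk m h k (Defs.shift x t) <-> Q m (Wv k x t) >= h).
Proof. intros Hh. unfold Vk. apply V0_Q; exact Hh. Qed.

Lemma sumR_const n c : sumR n (fun _ => c) = INR n * c.
Proof. induction n; simpl sumR; [simpl; ring|]. rewrite IHn, S_INR; ring. Qed.

Lemma sumR_nonneg n f : (forall j, (j < n)%nat -> 0 <= f j) -> 0 <= sumR n f.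
Proof. intros H; induction n; simpl; [lra|]. assert (0 <= f n) by (apply H; lia).
  assert (0 <= sumR n f) by (apply IHn; intros; apply H; lia). lra. Qed.

Lemma sumR_term n f j : (forall i, (i < n)%nat -> 0 <= f i) -> (j < n)%nat -> f j <= sumR n f.
Proof.
  induction n; intros H Hj; [lia|]. simpl.
  assert (0 <= sumR n f) by (apply sumR_nonneg; intros; apply H; lia).
  destruct (Nat.eq_dec j n) as [->|]; [lra|].
  assert (f j <= sumR n f) by (apply IHn; [intros; apply H; lia| lia]).
  assert (0 <= f n) by (apply H; lia). lra.
Qed.

Lemma coord_le_dist m x y j : (j < m)%nat -> Rabs (x j - y j) <= p7_dist m x y.
Proof.
  intros Hj. unfold p7_dist. rewrite <- sqrt_Rsqr_abs. apply sqrt_le_1_alt.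
  unfold Rsqr. replace ((x j - y j) * (x j - y j)) with ((x j - y j)^2) by ring.
  apply (sumR_term m (fun j => (x j - y j)^2)); [intros; apply pow2_ge_0| exact Hj].
Qed.

Definition Lc (m : nat) : R := 2^m * INR m + 1.

Lemma Lc_pos m : 0 < Lc m.
Proof. unfold Lc. assert (0 < 2^m) by (apply pow_lt; lra). assert (0 <= INR m) by apply pos_INR. nra. Qed.

Lemma phi_lip_t m k x t t' : Rabs (Q m (Wv k x t) - Q m (Wv k x t')) <= (Lc m - 1) * Rabs (t - t').
Proof.
  eapply Rle_trans; [apply Q_lip|]. unfold Wv.
  rewrite (sumR_ext m _ (fun _ => Rabs (t - t'))) by (intros; f_equal; ring).
  rewrite sumR_const. unfold Lc. right; ring.
Qed.

Lemma phi_lip_x m k x y t : Rabs (Q m (Wv k x t) - Q m (Wv k y t)) <= (Lc m - 1) * p7_dist m x y.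
Proof.
  eapply Rle_trans; [apply Q_lip|]. unfold Wv.
  assert (0 < 2^m) by (apply pow_lt; lra).
  assert (sumR m (fun j => Rabs (x j + t - 2 * PI * IZR (k j) - (y j + t - 2 * PI * IZR (k j))))
          <= sumR m (fun _ => p7_dist m x y)).
  { apply sumR_le; intros j Hj. replace (x j + t - 2 * PI * IZR (k j) - (y j + t - 2 * PI * IZR (k j))) with (x j - y j) by ring.
    apply coord_le_dist; exact Hj. }
  rewrite sumR_const in H0. unfold Lc. replace (2 ^ m * INR m + 1 - 1) with (2^m * INR m) by ring.
  rewrite Rmult_assoc. apply Rmult_le_compat_l; lra.
Qed.

Definition lo (k : nat -> Z) (x : nat -> R) : R := 2*PI*IZR (k 0%nat) - x 0%nat.

Lemma phi_dom m k x t c : (1 <= m)%nat -> 0 < c -> Q m (Wv k x t) >= c -> lo k x < t < lo k x + 2*PI.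
Proof.
  intros Hm Hc HQ. assert (H := Q_dom m _ c Hc HQ 0%nat ltac:(lia)). unfold Wv in H. unfold lo. lra.
Qed.

Lemma Wv_comb k x a b t : a <> b ->
  Wv k x t = comb ((b - t)/(b - a)) (Wv k x a) (Wv k x b).
Proof.
  intros Hab. apply functional_extensionality; intro j. unfold Wv, comb. field. lra.
Qed.

Lemma phi_strict m k x c a b t : (1 <= m)%nat -> 0 < c -> Q m (Wv k x a) >= c -> Q m (Wv k x b) >= c ->
  a < t < b -> Q m (Wv k x t) > c.
Proof.
  intros Hm Hc Ha Hb Ht. rewrite (Wv_comb k x a b t) by lra.
  apply Q_sconc; auto.
  - split; [apply Rdiv_lt_0_compat; lra|]. apply (Rmult_lt_reg_r (b - a)); [lra|].
    unfold Rdiv; rewrite Rmult_assoc, Rinv_l by lra. lra.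
  - exists 0%nat; split; [lia|]. unfold Wv. lra.
Qed.

Lemma phi_interval m k x c : (1 <= m)%nat -> 0 < c -> (exists t, Q m (Wv k x t) >= c) ->
  exists a b, a <= b /\ forall t, Q m (Wv k x t) >= c <-> a <= t <= b.
Proof.
  intros Hm Hc [t0 Ht0].
  set (E := fun t => Q m (Wv k x t) >= c).
  assert (Hclosed : forall t, ~ E t -> exists d, 0 < d /\ forall t', Rabs (t' - t) < d -> ~ E t').
  { intros t Ht. unfold E in Ht. apply Rnot_ge_lt in Ht.
    assert (HL := Lc_pos m).
    exists ((c - Q m (Wv k x t)) / Lc m). split; [apply Rdiv_lt_0_compat; lra|].
    intros t' Ht' HE. unfold E in HE. assert (Hl := phi_lip_t m k x t' t).
    assert (Rabs (t' - t) * Lc m < c - Q m (Wv k x t)).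
    { apply (Rmult_lt_compat_r (Lc m)) in Ht'; [|lra]. unfold Rdiv in Ht'.
      rewrite Rmult_assoc, Rinv_l, Rmult_1_r in Ht' by lra. exact Ht'. }
    assert (0 <= Rabs (t' - t)) by apply Rabs_pos.
    assert (Hr := Rle_abs (Q m (Wv k x t') - Q m (Wv k x t))). nra. }
  assert (Hbd : bound E).
  { exists (lo k x + 2*PI). intros t Ht. left; apply (phi_dom m k x t c Hm Hc Ht). }
  destruct (completeness E Hbd (ex_intro _ t0 Ht0)) as [b [Hub Hlub]].
  set (E' := fun t => E (- t)).
  assert (Hbd' : bound E').
  { exists (- lo k x). intros t Ht. unfold E' in Ht. assert (H := phi_dom m k x (-t) c Hm Hc Ht). lra. }
  assert (Ht0' : E' (- t0)) by (unfold E'; rewrite Ropp_involutive; exact Ht0).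
  destruct (completeness E' Hbd' (ex_intro _ (-t0) Ht0')) as [na [Hub' Hlub']].
  assert (Eb : E b).
  { apply NNPP; intro Hn. destruct (Hclosed b Hn) as [d [Hd Hd']].
    assert (Hup : is_upper_bound E (b - d/2)).
    { intros t Ht. destruct (Rle_or_lt t (b - d/2)) as [|Hlt]; [assumption|].
      exfalso. assert (t <= b) by (apply Hub; exact Ht).
      apply (Hd' t); [apply Rabs_def1; lra| exact Ht]. }
    specialize (Hlub _ Hup). lra. }
  assert (Ea : E (- na)).
  { apply NNPP; intro Hn. destruct (Hclosed (-na) Hn) as [d [Hd Hd']].
    assert (Hup : is_upper_bound E' (na - d/2)).
    { intros t Ht. destruct (Rle_or_lt t (na - d/2)) as [|Hlt]; [assumption|].
      exfalso. assert (t <= na) by (apply Hub'; exact Ht).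
      apply (Hd' (-t)); [apply Rabs_def1; lra| exact Ht]. }
    specialize (Hlub' _ Hup). lra. }
  assert (Hab : - na <= b) by (apply Hub; exact Ea).
  exists (- na), b. split; [exact Hab|]. intros t; split.
  - intros Ht. split; [|apply Hub; exact Ht].
    assert (- t <= na) by (apply Hub'; unfold E'; rewrite Ropp_involutive; exact Ht). lra.
  - intros [H1 H2].
    destruct (Req_dec t (-na)) as [->|Hn1]; [exact Ea|].
    destruct (Req_dec t b) as [->|Hn2]; [exact Eb|].
    left. apply (phi_strict m k x c (-na) b t Hm Hc Ea Eb). lra.
Qed.

Lemma tau_val m h k x a b : 0 < h -> a <= b -> (forall t, Q m (Wv k x t) >= h <-> a <= t <= b) ->
  tau m h k x = sqrt (INR m) * (b - a).
Proof.
  intros Hh Hab H. unfold tau. f_equal. apply lebesgue_interval; [exact Hab|].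
  intros t. rewrite Vk_iff by exact Hh. apply H.
Qed.

Lemma tau_zero m h k x : 0 < h -> (forall t, ~ Q m (Wv k x t) >= h) -> tau m h k x = 0.
Proof.
  intros Hh H. unfold tau. rewrite lebesgue_empty; [ring|].
  intros t Ht. rewrite Vk_iff in Ht by exact Hh. exact (H t Ht).
Qed.


Lemma supp_iff m h k x : 0 < h -> (supp_tau m h k x <-> Hyp m x /\ exists t, Q m (Wv k x t) >= h).
Proof.
  intros Hh; unfold supp_tau; split; intros [H1 [t Ht]]; split; auto; exists t;
  [rewrite <- Vk_iff | rewrite Vk_iff]; auto.
Qed.

Lemma interior_of m h k x t : 0 < h -> Hyp m x -> Q m (Wv k x t) > h -> p7_rel_interior m (supp_tau m h k) x.
Proof.
  intros Hh Hx HQ. split.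
  - apply supp_iff; [exact Hh|]. split; [exact Hx| exists t; lra].
  - assert (HL := Lc_pos m). exists ((Q m (Wv k x t) - h) / Lc m). split.
    + apply Rlt_gt, Rdiv_lt_0_compat; lra.
    + intros y Hy Hd. apply supp_iff; [exact Hh|]. split; [exact Hy| exists t].
      assert (Hl := phi_lip_x m k x y t).
      assert (p7_dist m x y * Lc m < Q m (Wv k x t) - h).
      { apply (Rmult_lt_compat_r (Lc m)) in Hd; [|lra]. unfold Rdiv in Hd.
        rewrite Rmult_assoc, Rinv_l, Rmult_1_r in Hd by lra. exact Hd. }
      assert (0 <= p7_dist m x y) by (unfold p7_dist; apply sqrt_pos).
      assert (Hr := Rle_abs (Q m (Wv k x t) - Q m (Wv k y t))). nra.
Qed.

Lemma Hyp_comb m l x y : Hyp m x -> Hyp m y -> Hyp m (comb l x y).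
Proof.
  intros [Vx Sx] [Vy Sy]. split.
  - intros j Hj. unfold comb. rewrite Vx, Vy by exact Hj. ring.
  - unfold comb. rewrite sumR_lin, Sx, Sy. ring.
Qed.

Lemma Wv_comb2 k l x y a b :
  Wv k (comb l x y) (l * a + (1 - l) * b) = comb l (Wv k x a) (Wv k y b).
Proof. apply functional_extensionality; intro j; unfold Wv, comb; ring. Qed.

Lemma sumR_minus n f g : sumR n (fun j => f j - g j) = sumR n f - sumR n g.
Proof. induction n; simpl; [ring| rewrite IHn; ring]. Qed.

Lemma Wv_diff m k x y a b : (1 <= m)%nat -> Hyp m x -> Hyp m y -> x <> y ->
  exists j, (j < m)%nat /\ Wv k x a j <> Wv k y b j.
Proof.
  intros Hm [Vx Sx] [Vy Sy] Hxy. apply NNPP; intro Hn.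
  assert (Heq : forall j, (j < m)%nat -> x j - y j = b - a).
  { intros j Hj. apply NNPP; intro Hne. apply Hn. exists j; split; [exact Hj|]. unfold Wv. intro E; apply Hne; lra. }
  assert (Hs : sumR m (fun j => x j - y j) = INR m * (b - a)).
  { rewrite <- sumR_const. apply sumR_ext; exact Heq. }
  rewrite sumR_minus, Sx, Sy in Hs.
  assert (0 < INR m) by (apply lt_0_INR; lia).
  assert (b - a = 0) by nra.
  apply Hxy, functional_extensionality; intro j.
  destruct (lt_dec j m) as [Hj|Hj].
  - specialize (Heq j Hj); lra.
  - rewrite Vx, Vy by lia; reflexivity.
Qed.

Lemma phi_open m k x c t a b : 0 < c -> Q m (Wv k x t) > c ->
  (forall t, Q m (Wv k x t) >= c <-> a <= t <= b) -> a < t < b.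
Proof.
  intros Hc HQ Hab. assert (HL := Lc_pos m).
  set (d := (Q m (Wv k x t) - c) / Lc m).
  assert (Hd : 0 < d) by (apply Rdiv_lt_0_compat; lra).
  assert (Hdl : d * Lc m = Q m (Wv k x t) - c) by (unfold d; field; lra).
  assert (Hnear : forall t', Rabs (t' - t) <= d / 2 -> Q m (Wv k x t') >= c).
  { intros t' Ht'. assert (Hl := phi_lip_t m k x t' t).
    assert (Hr := Rle_abs (Q m (Wv k x t) - Q m (Wv k x t'))).
    rewrite Rabs_minus_sym in Hl.
    assert (0 <= Rabs (t' - t)) by apply Rabs_pos. nra. }
  assert (H1 : a <= t - d/2 <= b) by (apply Hab, Hnear; rewrite Rabs_left; lra).
  assert (H2 : a <= t + d/2 <= b) by (apply Hab, Hnear; rewrite Rabs_right; lra).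
  lra.
Qed.


Lemma tau_nonneg (m : nat) (h : R) (k : nat -> Z) (hm : (2 <= m)%nat) (hh : 0 < h) x : supp_tau m h k x -> 0 <= tau m h k x.
Proof.
  assert (m1 : (1 <= m)%nat) by lia.
  intros Hx. apply supp_iff in Hx; [|exact hh]. destruct Hx as [_ Hex].
  destruct (phi_interval m k x h m1 hh Hex) as [a [b [Hab HI]]].
  rewrite (tau_val m h k x a b hh Hab HI). apply Rmult_le_pos; [apply sqrt_pos| lra].
Qed.

Lemma supp_convex (m : nat) (h : R) (k : nat -> Z) (hm : (2 <= m)%nat) (hh : 0 < h) : p7_convex (supp_tau m h k).
Proof.
  assert (m1 : (1 <= m)%nat) by lia.
  intros x y l Hx Hy Hl. apply supp_iff in Hx; [|exact hh]. apply supp_iff in Hy; [|exact hh].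
  destruct Hx as [Hx [ta Ha]]; destruct Hy as [Hy [tb Hb]].
  apply supp_iff; [exact hh|]. split; [apply Hyp_comb; assumption|].
  exists (l * ta + (1 - l) * tb). rewrite Wv_comb2. apply Q_conc; assumption.
Qed.

Lemma supp_sconvex (m : nat) (h : R) (k : nat -> Z) (hm : (2 <= m)%nat) (hh : 0 < h) : p7_strictly_convex m (supp_tau m h k).
Proof.
  assert (m1 : (1 <= m)%nat) by lia.
  split; [exact (supp_convex m h k hm hh)|].
  intros x y l Hx Hy Hxy Hl. apply supp_iff in Hx; [|exact hh]. apply supp_iff in Hy; [|exact hh].
  destruct Hx as [Hx [ta Ha]]; destruct Hy as [Hy [tb Hb]].
  apply (interior_of m h k _ (l * ta + (1 - l) * tb) hh (Hyp_comb m l x y Hx Hy)).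
  rewrite Wv_comb2. apply Q_sconc; auto. apply Wv_diff; auto.
Qed.

Lemma tau_sconc (m : nat) (h : R) (k : nat -> Z) (hm : (2 <= m)%nat) (hh : 0 < h) : p7_strictly_concave_on m (supp_tau m h k) (tau m h k).
Proof.
  assert (m1 : (1 <= m)%nat) by lia.
  intros x y l Hx Hy Hxy Hl. apply supp_iff in Hx; [|exact hh]. apply supp_iff in Hy; [|exact hh].
  destruct Hx as [Hx Ex]; destruct Hy as [Hy Ey].
  destruct (phi_interval m k x h m1 hh Ex) as [ax [bx [Habx HIx]]].
  destruct (phi_interval m k y h m1 hh Ey) as [ay [by_ [Haby HIy]]].
  rewrite (tau_val m h k x ax bx hh Habx HIx), (tau_val m h k y ay by_ hh Haby HIy).
  set (c := comb l x y).
  assert (Qa : Q m (Wv k c (l * ax + (1 - l) * ay)) > h).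
  { unfold c; rewrite Wv_comb2. apply Q_sconc; auto; [apply HIx; lra| apply HIy; lra|].
    apply Wv_diff; auto. }
  assert (Qb : Q m (Wv k c (l * bx + (1 - l) * by_)) > h).
  { unfold c; rewrite Wv_comb2. apply Q_sconc; auto; [apply HIx; lra| apply HIy; lra|].
    apply Wv_diff; auto. }
  destruct (phi_interval m k c h m1 hh (ex_intro (fun t => Q m (Wv k c t) >= h) _ (Rgt_ge _ _ Qa))) as [ac [bc [Habc HIc]]].
  rewrite (tau_val m h k c ac bc hh Habc HIc).
  assert (H1 := phi_open m k c h _ ac bc hh Qa HIc).
  assert (H2 := phi_open m k c h _ ac bc hh Qb HIc).
  assert (Hs : 0 < sqrt (INR m)) by (apply sqrt_lt_R0, lt_0_INR; lia).
  apply Rlt_gt.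
  replace (l * (sqrt (INR m) * (bx - ax)) + (1 - l) * (sqrt (INR m) * (by_ - ay)))
    with (sqrt (INR m) * ((l * bx + (1 - l) * by_) - (l * ax + (1 - l) * ay))) by ring.
  apply Rmult_lt_compat_l; lra.
Qed.

Lemma full_dim (m : nat) (h : R) (k : nat -> Z) (hm : (2 <= m)%nat) (hh : 0 < h) (hh2 : h < 2^m) : p7_full_dim_in_H m (supp_tau m h k).
Proof.
  assert (m1 : (1 <= m)%nat) by lia.
  split.
  - intros x Hx; apply Hx.
  - set (Ks := sumR m (fun j => IZR (k j))).
    assert (Hm0 : 0 < INR m) by (apply lt_0_INR; lia).
    set (x0 := fun j => if lt_dec j m then 2*PI*IZR (k j) - 2*PI*Ks/INR m else 0).
    exists x0. apply (interior_of m h k x0 (PI + 2*PI*Ks/INR m) hh).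
    + split.
      * intros j Hj. unfold x0. destruct (lt_dec j m); [lia| reflexivity].
      * rewrite (sumR_ext m _ (fun j => (2*PI) * IZR (k j) + (-(2*PI*Ks/INR m)) * 1)).
        -- rewrite sumR_lin, sumR_const. fold Ks. field. lra.
        -- intros j Hj. unfold x0. destruct (lt_dec j m); [ring| lia].
    + unfold Q. rewrite (prodR_ext m _ (fun _ => 2)).
      * assert (E : forall n, prodR n (fun _ => 2) = 2^n) by (induction n; simpl; [ring| rewrite IHn; ring]).
        rewrite E. lra.
      * intros j Hj. unfold Wv, x0. destruct (lt_dec j m); [|lia].
        replace (2 * PI * IZR (k j) - 2 * PI * Ks / INR m + (PI + 2 * PI * Ks / INR m) - 2 * PI * IZR (k j)) with PI by ring.
        rewrite q_in by (assert (H := PI_RGT_0); lra).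
        replace (PI/2) with (PI/2) by reflexivity. rewrite sin_PI2. ring.
Qed.




Lemma cv_const c : Un_cv (fun _ => c) c.
Proof. intros e He; exists O; intros; unfold Rdist; rewrite Rminus_diag, Rabs_R0; lra. Qed.

Lemma incr_ge (phi : nat -> nat) : (forall n, (phi n < phi (S n))%nat) -> forall n, (n <= phi n)%nat.
Proof. intros H n; induction n; [lia| specialize (H n); lia]. Qed.

Lemma cv_sub (u : nat -> R) l (phi : nat -> nat) : (forall n, (phi n < phi (S n))%nat) ->
  Un_cv u l -> Un_cv (fun n => u (phi n)) l.
Proof.
  intros Hp Hu e He. destruct (Hu e He) as [N HN]. exists N; intros n Hn.
  apply HN. assert (H := incr_ge phi Hp n). lia.
Qed.

Lemma bw1 (u : nat -> R) B : (forall n, Rabs (u n) <= B) ->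
  exists (phi : nat -> nat) l, (forall n, (phi n < phi (S n))%nat) /\ Un_cv (fun n => u (phi n)) l.
Proof.
  intros Hb.
  destruct (Bolzano_Weierstrass u (fun c => -B <= c <= B) (compact_P3 (-B) B)) as [l Hl].
  { intro n; specialize (Hb n); apply Rabs_le_inv in Hb; exact Hb. }
  assert (Hg : forall N n, exists p, (N <= p)%nat /\ Rabs (u p - l) < / (INR n + 1)).
  { intros N n. assert (Hp : 0 < / (INR n + 1)) by (apply Rinv_0_lt_compat; assert (H := pos_INR n); lra).
    destruct (Hl (fun y => Rabs (y - l) < / (INR n + 1)) N) as [p Hp']; [|exists p; exact Hp'].
    exists (mkposreal _ Hp); intros y Hy; exact Hy. }
  set (g := fun N n => proj1_sig (constructive_indefinite_description _ (Hg N n))).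
  assert (Hgs : forall N n, (N <= g N n)%nat /\ Rabs (u (g N n) - l) < / (INR n + 1)).
  { intros N n; unfold g; destruct (constructive_indefinite_description _ (Hg N n)); simpl; exact a. }
  set (phi := fix f n := match n with O => g O O | S n' => g (S (f n')) (S n') end).
  exists phi, l. split.
  - intro n. simpl. destruct (Hgs (S (phi n)) (S n)); lia.
  - intros e He. destruct (archimed (/ e)) as [Ha _].
    assert (Hie : 0 < / e) by (apply Rinv_0_lt_compat; lra).
    assert (Hup : (0 <= up (/ e))%Z) by (apply le_IZR; lra).
    exists (Z.to_nat (up (/ e))). intros n Hn. unfold Rdist.
    assert (Hphi : Rabs (u (phi n) - l) < / (INR n + 1)).
    { destruct n; simpl; [apply Hgs| apply Hgs]. }
    eapply Rlt_trans; [exact Hphi|].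
    assert (HnR : IZR (up (/ e)) <= INR n).
    { rewrite <- (Z2Nat.id (up (/e))) by exact Hup. rewrite <- INR_IZR_INZ. apply le_INR; lia. }
    assert (He' : / e < INR n + 1) by lra.
    apply (Rmult_lt_reg_l (INR n + 1)); [assert (H := pos_INR n); lra|].
    rewrite Rinv_r by (assert (H := pos_INR n); lra).
    apply (Rmult_lt_compat_r e) in He'; [|lra]. rewrite Rinv_l in He' by lra. lra.
Qed.

Lemma bwM : forall M (v : nat -> nat -> R) B, (forall n j, (j < M)%nat -> Rabs (v n j) <= B) ->
  exists (phi : nat -> nat) (lim : nat -> R), (forall n, (phi n < phi (S n))%nat) /\
    forall j, (j < M)%nat -> Un_cv (fun n => v (phi n) j) (lim j).
Proof.
  induction M; intros v B Hb.
  - exists (fun n => n), (fun _ => 0). split; [intros; lia| intros; lia].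
  - destruct (IHM v B ltac:(intros; apply Hb; lia)) as [phi [lim [Hp Hc]]].
    destruct (bw1 (fun n => v (phi n) M) B ltac:(intros; apply Hb; lia)) as [psi [l [Hq Hl]]].
    exists (fun n => phi (psi n)), (fun j => if Nat.eq_dec j M then l else lim j). split.
    + intro n. specialize (Hq n). assert (Hmono : forall a b, (a < b)%nat -> (phi a < phi b)%nat).
      { intros a b Hab; induction Hab; [apply Hp| specialize (Hp m); lia]. }
      apply Hmono; exact Hq.
    + intros j Hj. destruct (Nat.eq_dec j M) as [->|Hne].
      * exact Hl.
      * apply (cv_sub (fun n => v (phi n) j)); [exact Hq| apply Hc; lia].
Qed.

Lemma sum_cv0 M (f : nat -> nat -> R) : (forall j, (j < M)%nat -> Un_cv (fun n => f n j) 0) ->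
  Un_cv (fun n => sumR M (f n)) 0.
Proof.
  induction M; intros H.
  - simpl. apply cv_const.
  - simpl. replace 0 with (0 + 0) by ring. apply CV_plus; [apply IHM; intros; apply H; lia| apply H; lia].
Qed.

Lemma cv_abs_diff (u : nat -> R) l : Un_cv u l -> Un_cv (fun n => Rabs (u n - l)) 0.
Proof.
  intros Hu e He. destruct (Hu e He) as [N HN]; exists N; intros n Hn.
  unfold Rdist in *. rewrite Rminus_0_r, Rabs_Rabsolu. apply HN; exact Hn.
Qed.

Lemma lim_ge c a (e : nat -> R) : (forall n, c <= a + e n) -> Un_cv e 0 -> c <= a.
Proof.
  intros H He. destruct (Rle_or_lt c a) as [|Hlt]; [assumption|].
  destruct (He (c - a) ltac:(lra)) as [N HN]. specialize (HN N (le_n N)). specialize (H N).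
  unfold Rdist in HN. rewrite Rminus_0_r in HN. apply Rabs_def2 in HN. lra.
Qed.

Lemma sq_sum_le n (f : nat -> R) : sqrt (sumR n (fun j => (f j)^2)) <= sumR n (fun j => Rabs (f j)).
Proof.
  assert (Hs : 0 <= sumR n (fun j => Rabs (f j))) by (apply sumR_nonneg; intros; apply Rabs_pos).
  rewrite <- (sqrt_pow2 (sumR n (fun j => Rabs (f j)))) by exact Hs.
  apply sqrt_le_1_alt. clear Hs.
  induction n; simpl; [lra|].
  assert (Hs : 0 <= sumR n (fun j => Rabs (f j))) by (apply sumR_nonneg; intros; apply Rabs_pos).
  assert (0 <= Rabs (f n)) by apply Rabs_pos.
  assert (E : (f n)^2 = (Rabs (f n))^2) by (rewrite <- Rsqr_pow2 ; rewrite <- Rsqr_pow2; rewrite Rsqr_abs; reflexivity).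
  simpl in IHn. simpl in E. nra.
Qed.

Lemma dist_le_sum m x y : p7_dist m x y <= sumR m (fun j => Rabs (x j - y j)).
Proof. unfold p7_dist. apply (sq_sum_le m (fun j => x j - y j)). Qed.

Lemma sumR_Wv m k x t : sumR m (Wv k x t) = sumR m x + INR m * t - 2*PI*sumR m (fun j => IZR (k j)).
Proof. induction m; simpl sumR; [simpl; ring|]. rewrite IHm, S_INR. unfold Wv. ring. Qed.

Lemma sumR_abs n f : Rabs (sumR n f) <= sumR n (fun j => Rabs (f j)).
Proof. induction n; simpl; [rewrite Rabs_R0; lra|]. eapply Rle_trans; [apply Rabs_triang| lra]. Qed.

Lemma supp_compact m h k : (2 <= m)%nat -> 0 < h -> p7_compact m (supp_tau m h k).
Proof.
  intros hm hh u Hu.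
  assert (Hex : forall n, exists t, Q m (Wv k (u n) t) >= h) by (intro n; apply (proj1 (supp_iff m h k (u n) hh) (Hu n))).
  assert (HH : forall n, Hyp m (u n)) by (intro n; apply (proj1 (supp_iff m h k (u n) hh) (Hu n))).
  set (tn := fun n => proj1_sig (constructive_indefinite_description _ (Hex n))).
  assert (Htn : forall n, Q m (Wv k (u n) (tn n)) >= h).
  { intro n; unfold tn; destruct (constructive_indefinite_description _ (Hex n)) as [tt Htt]; simpl; exact Htt. }
  set (Ks := sumR m (fun j => IZR (k j))).
  set (v := fun n j => if lt_dec j m then Wv k (u n) (tn n) j else tn n).
  set (B := 2*PI*INR m + 2*PI*Rabs Ks + 2*PI).
  assert (Hm0 : 1 <= INR m) by (apply (le_INR 1); lia).
  assert (HPI := PI_RGT_0).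
  assert (Hb : forall n j, (j < S m)%nat -> Rabs (v n j) <= B).
  { intros n j Hj. unfold v. assert (Hd := Q_dom m _ h hh (Htn n)).
    assert (HKs := Rabs_pos Ks).
    destruct (lt_dec j m) as [Hjm|Hjm].
    - specialize (Hd j Hjm). rewrite Rabs_right by lra. unfold B. nra.
    - assert (Hs := sumR_Wv m k (u n) (tn n)). rewrite (proj2 (HH n)) in Hs. fold Ks in Hs.
      assert (S1 : 0 <= sumR m (Wv k (u n) (tn n))) by (apply sumR_nonneg; intros i Hi; specialize (Hd i Hi); lra).
      assert (S2 : sumR m (Wv k (u n) (tn n)) <= INR m * (2*PI)).
      { rewrite <- sumR_const. apply sumR_le; intros i Hi; specialize (Hd i Hi); lra. }
      assert (Hmt : Rabs (INR m * tn n) <= 2*PI*INR m + 2*PI*Rabs Ks).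
      { replace (INR m * tn n) with (sumR m (Wv k (u n) (tn n)) + 2*PI*Ks) by lra.
        eapply Rle_trans; [apply Rabs_triang|]. rewrite Rabs_right by lra. rewrite Rabs_mult, (Rabs_right (2*PI)) by lra. lra. }
      rewrite Rabs_mult, (Rabs_right (INR m)) in Hmt by lra.
      assert (0 <= Rabs (tn n)) by apply Rabs_pos. unfold B. nra. }
  destruct (bwM (S m) v B Hb) as [phi [lim [Hp Hc]]].
  set (x := fun j => if lt_dec j m then lim j - lim m + 2*PI*IZR (k j) else 0).
  assert (Hcu : forall j, (j < m)%nat -> Un_cv (fun n => u (phi n) j) (x j)).
  { intros j Hj. unfold x. destruct (lt_dec j m) as [_|]; [|lia].
    assert (H1 := Hc j ltac:(lia)). assert (H2 := Hc m ltac:(lia)).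
    assert (H3 := CV_plus _ _ _ _ (CV_minus _ _ _ _ H1 H2) (cv_const (2*PI*IZR (k j)))).
    intros e He; destruct (H3 e He) as [N HN]; exists N; intros n Hn; specialize (HN n Hn).
    unfold v in HN. destruct (lt_dec j m); [|lia]. destruct (lt_dec m m); [lia|].
    unfold Wv in HN. replace (u (phi n) j) with (u (phi n) j + tn (phi n) - 2 * PI * IZR (k j) - tn (phi n) + 2 * PI * IZR (k j)) by ring.
    exact HN. }
  assert (Hsum0 : Un_cv (fun n => sumR m (fun j => Rabs (u (phi n) j - x j))) 0).
  { apply (sum_cv0 m (fun n j => Rabs (u (phi n) j - x j))). intros j Hj. apply cv_abs_diff, Hcu; exact Hj. }
  assert (Hx : Hyp m x).
  { split.
    - intros j Hj; unfold x; destruct (lt_dec j m); [lia| reflexivity].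
    - apply Rle_antisym.
      + apply (lim_ge _ 0 (fun n => sumR m (fun j => Rabs (u (phi n) j - x j)))); [|exact Hsum0].
        intro n. assert (E := sumR_minus m x (u (phi n))). rewrite (proj2 (HH (phi n))) in E.
        assert (A := sumR_abs m (fun j => x j - u (phi n) j)). cbv beta in A.
        rewrite (sumR_ext m (fun j => Rabs (x j - u (phi n) j)) (fun j => Rabs (u (phi n) j - x j))) in A
          by (intros; apply Rabs_minus_sym).
        assert (Hr := Rle_abs (sumR m (fun j => x j - u (phi n) j))). lra.
      + apply (lim_ge _ _ (fun n => sumR m (fun j => Rabs (u (phi n) j - x j)))); [|exact Hsum0].
        intro n. assert (E := sumR_minus m (u (phi n)) x). rewrite (proj2 (HH (phi n))) in E.
        assert (A := sumR_abs m (fun j => u (phi n) j - x j)).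
        assert (Hr := Rle_abs (sumR m (fun j => u (phi n) j - x j))). lra. }
  exists phi, x. split; [exact Hp|]. split.
  - apply supp_iff; [exact hh|]. split; [exact Hx|]. exists (lim m).
    set (e := fun n => 2^m * sumR m (fun j => Rabs (v (phi n) j - lim j))).
    assert (He : Un_cv e 0).
    { unfold e. replace 0 with (2^m * 0) by ring. apply CV_mult; [apply cv_const|].
      apply (sum_cv0 m (fun n j => Rabs (v (phi n) j - lim j))). intros j Hj. apply cv_abs_diff, Hc; lia. }
    apply Rle_ge, (lim_ge _ _ e); [|exact He]. intro n.
    assert (L := Q_lip m (Wv k (u (phi n)) (tn (phi n))) (Wv k x (lim m))).
    rewrite (sumR_ext m _ (fun j => Rabs (v (phi n) j - lim j))) in L.
    + assert (Hr := Rle_abs (Q m (Wv k (u (phi n)) (tn (phi n))) - Q m (Wv k x (lim m)))).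
      specialize (Htn (phi n)). unfold e. lra.
    + intros j Hj. unfold v, Wv, x. destruct (lt_dec j m); [|lia]. f_equal. ring.
  - intros e He. destruct (Hsum0 e He) as [N HN]. exists N. intros n Hn.
    specialize (HN n Hn). unfold Rdist in HN. rewrite Rminus_0_r in HN.
    eapply Rle_lt_trans; [apply dist_le_sum|].
    eapply Rle_lt_trans; [apply Rle_abs| exact HN].
Qed.


Lemma lip_cont (f : R -> R) L t0 : 0 <= L -> (forall t t', Rabs (f t - f t') <= L * Rabs (t - t')) ->
  continuity_pt f t0.
Proof.
  intros HL Hf. unfold continuity_pt, continue_in, limit1_in, limit_in. intros e He.
  exists (e / (L + 1)). split; [apply Rdiv_lt_0_compat; lra|].
  intros t [_ Ht]. simpl in *. unfold R_dist in *.
  eapply Rle_lt_trans; [apply Hf|].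
  assert (Rabs (t - t0) * (L + 1) < e).
  { apply (Rmult_lt_compat_r (L + 1)) in Ht; [|lra]. unfold Rdiv in Ht.
    rewrite Rmult_assoc, Rinv_l, Rmult_1_r in Ht by lra. exact Ht. }
  assert (0 <= Rabs (t - t0)) by apply Rabs_pos. nra.
Qed.

Lemma sep_max (f : R -> R) L p r c : 0 <= L -> (forall t t', Rabs (f t - f t') <= L * Rabs (t - t')) ->
  (forall t, p <= t <= r -> f t < c) -> exists eta, 0 < eta /\ forall t, p <= t <= r -> f t <= c - eta.
Proof.
  intros HL Hf Hc. destruct (Rle_or_lt p r) as [Hpr|Hpr].
  - destruct (continuity_ab_maj f p r Hpr) as [M [HM HMr]]; [intros; apply (lip_cont f L); assumption|].
    exists (c - f M). split; [specialize (Hc M HMr); lra|]. intros t Ht; specialize (HM t Ht); lra.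
  - exists 1; split; [lra| intros; lra].
Qed.

Lemma sep_min (f : R -> R) L p r c : 0 <= L -> (forall t t', Rabs (f t - f t') <= L * Rabs (t - t')) ->
  (forall t, p <= t <= r -> f t > c) -> exists eta, 0 < eta /\ forall t, p <= t <= r -> f t >= c + eta.
Proof.
  intros HL Hf Hc. destruct (Rle_or_lt p r) as [Hpr|Hpr].
  - destruct (continuity_ab_min f p r Hpr) as [M [HM HMr]]; [intros; apply (lip_cont f L); assumption|].
    exists (f M - c). split; [specialize (Hc M HMr); lra|]. intros t Ht; specialize (HM t Ht); lra.
  - exists 1; split; [lra| intros; lra].
Qed.

Lemma near_x m k x y eta : 0 < eta -> p7_dist m x y < eta / Lc m ->
  forall t, Rabs (Q m (Wv k y t) - Q m (Wv k x t)) < eta.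
Proof.
  intros He Hd t. assert (HL := Lc_pos m). rewrite Rabs_minus_sym.
  eapply Rle_lt_trans; [apply phi_lip_x|].
  assert (p7_dist m x y * Lc m < eta).
  { apply (Rmult_lt_compat_r (Lc m)) in Hd; [|lra]. unfold Rdiv in Hd.
    rewrite Rmult_assoc, Rinv_l, Rmult_1_r in Hd by lra. exact Hd. }
  assert (0 <= p7_dist m x y) by (unfold p7_dist; apply sqrt_pos). nra.
Qed.

Lemma tau_cont m h k : (2 <= m)%nat -> 0 < h -> p7_continuous_on_H m (tau m h k).
Proof.
  intros hm hh x Hx eps Heps.
  assert (m1 : (1 <= m)%nat) by lia.
  assert (HL := Lc_pos m).
  assert (HLip : forall z, forall t t', Rabs (Q m (Wv k z t) - Q m (Wv k z t')) <= (Lc m - 1) * Rabs (t - t'))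
    by (intros; apply phi_lip_t).
  assert (HL1 : 0 <= Lc m - 1) by (unfold Lc; assert (0 < 2^m) by (apply pow_lt; lra); assert (0 <= INR m) by apply pos_INR; nra).
  assert (HPI := PI_RGT_0).
  destruct (classic (exists t, Q m (Wv k x t) >= h)) as [Hex|Hnex].
  - destruct (phi_interval m k x h m1 hh Hex) as [a [b [Hab HI]]].
    rewrite (tau_val m h k x a b hh Hab HI).
    set (sm := sqrt (INR m)). assert (Hsm : 0 <= sm) by apply sqrt_pos.
    set (e' := eps / (4 * (sm + 1))).
    assert (He' : 0 < e') by (unfold e'; apply Rdiv_lt_0_compat; lra).
    assert (He'2 : 2 * sm * e' < eps).
    { unfold e'. apply (Rmult_lt_reg_r (4 * (sm + 1))); [lra|]. unfold Rdiv.
      replace (2 * sm * (eps * / (4 * (sm + 1))) * (4 * (sm + 1))) with (2 * sm * eps * ((4 * (sm + 1)) * / (4 * (sm + 1)))) by ring.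
      rewrite Rinv_r by lra. nra. }
    assert (Ha := phi_dom m k x a h m1 hh (proj2 (HI a) ltac:(lra))).
    assert (Hb := phi_dom m k x b h m1 hh (proj2 (HI b) ltac:(lra))).
    destruct (sep_max (fun t => Q m (Wv k x t)) _ (b + e') (b + e' + 2*PI) h HL1 (HLip x)) as [eR [HeR HR]].
    { intros t Ht. apply Rnot_ge_lt. intro H. apply HI in H. lra. }
    destruct (sep_max (fun t => Q m (Wv k x t)) _ (a - e' - 2*PI) (a - e') h HL1 (HLip x)) as [eL [HeL HLf]].
    { intros t Ht. apply Rnot_ge_lt. intro H. apply HI in H. lra. }
    destruct (sep_min (fun t => Q m (Wv k x t)) _ (a + e') (b - e') h HL1 (HLip x)) as [eI [HeI HIn]].
    { intros t Ht. apply (phi_strict m k x h a b t m1 hh); [apply HI; lra| apply HI; lra| lra]. }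
    set (eta := Rmin (Rmin eR eL) (Rmin eI (h/2))).
    assert (Heta : 0 < eta) by (unfold eta; repeat apply Rmin_pos; lra).
    assert (E1 := Rmin_l (Rmin eR eL) (Rmin eI (h/2))). assert (E2 := Rmin_r (Rmin eR eL) (Rmin eI (h/2))).
    assert (E3 := Rmin_l eR eL). assert (E4 := Rmin_r eR eL). assert (E5 := Rmin_l eI (h/2)). assert (E6 := Rmin_r eI (h/2)).
    fold eta in E1, E2.
    exists (eta / Lc m). split; [apply Rlt_gt, Rdiv_lt_0_compat; lra|].
    intros y Hy Hd. assert (Hn := near_x m k x y eta Heta Hd).
    assert (Sub : forall t, Q m (Wv k y t) >= h -> a - e' <= t <= b + e').
    { intros t Ht. specialize (Hn t). apply Rabs_def2 in Hn.
      assert (Hpos : Q m (Wv k x t) >= h/2) by lra.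
      assert (Hd' := phi_dom m k x t (h/2) m1 ltac:(lra) Hpos).
      split.
      - destruct (Rle_or_lt (a - e') t) as [|Hlt]; [assumption|].
        specialize (HLf t ltac:(lra)). lra.
      - destruct (Rle_or_lt t (b + e')) as [|Hlt]; [assumption|].
        specialize (HR t ltac:(lra)). lra. }
    assert (Sup : forall t, a + e' <= t <= b - e' -> Q m (Wv k y t) >= h).
    { intros t Ht. specialize (Hn t). apply Rabs_def2 in Hn. specialize (HIn t Ht). lra. }
    destruct (classic (exists t, Q m (Wv k y t) >= h)) as [Hey|Hney].
    + destruct (phi_interval m k y h m1 hh Hey) as [ay [by_ [Haby HIy]]].
      rewrite (tau_val m h k y ay by_ hh Haby HIy). fold sm.
      assert (B1 : a - e' <= ay) by (apply (Sub ay), HIy; lra).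
      assert (B2 : by_ <= b + e') by (apply (Sub by_), HIy; lra).
      apply Rabs_def1.
      * assert (sm * (by_ - ay) <= sm * (b - a) + 2 * sm * e') by nra. lra.
      * destruct (Rle_or_lt (2 * e') (b - a)) as [Hw|Hw].
        -- assert (B3 : ay <= a + e') by (apply HIy, Sup; lra).
           assert (B4 : b - e' <= by_) by (apply HIy, Sup; lra).
           assert (sm * (b - a) - 2 * sm * e' <= sm * (by_ - ay)) by nra. lra.
        -- assert (sm * (b - a) <= sm * (2 * e')) by (apply Rmult_le_compat_l; lra).
           assert (0 <= sm * (by_ - ay)) by (apply Rmult_le_pos; lra). lra.
    + rewrite (tau_zero m h k y hh ltac:(intros t Ht; apply Hney; exists t; exact Ht)).
      assert (Hw : b - a < 2 * e').
      { destruct (Rlt_or_le (b - a) (2 * e')) as [|Hw]; [assumption|].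
        exfalso; apply Hney. exists ((a + b)/2). apply Sup; lra. }
      assert (sm * (b - a) <= sm * (2 * e')) by (apply Rmult_le_compat_l; lra).
      assert (0 <= sm * (b - a)) by (apply Rmult_le_pos; lra).
      rewrite Rminus_0_l, Rabs_Ropp, Rabs_right by lra. lra.
  - assert (Hlt : forall t, Q m (Wv k x t) < h) by (intro t; apply Rnot_ge_lt; intro H; apply Hnex; exists t; exact H).
    rewrite (tau_zero m h k x hh ltac:(intros t Ht; apply Hnex; exists t; exact Ht)).
    destruct (sep_max (fun t => Q m (Wv k x t)) _ (lo k x) (lo k x + 2*PI) h HL1 (HLip x)) as [e0 [He0 H0]].
    { intros t _; apply Hlt. }
    set (eta := Rmin e0 (h/2)).
    assert (Heta : 0 < eta) by (unfold eta; apply Rmin_pos; lra).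
    assert (E1 := Rmin_l e0 (h/2)). assert (E2 := Rmin_r e0 (h/2)). fold eta in E1, E2.
    exists (eta / Lc m). split; [apply Rlt_gt, Rdiv_lt_0_compat; lra|].
    intros y Hy Hd. assert (Hn := near_x m k x y eta Heta Hd).
    rewrite (tau_zero m h k y hh).
    + rewrite Rminus_diag, Rabs_R0; lra.
    + intros t Ht. specialize (Hn t). apply Rabs_def2 in Hn.
      assert (Hpos : Q m (Wv k x t) >= h/2) by lra.
      assert (Hd' := phi_dom m k x t (h/2) m1 ltac:(lra) Hpos).
      specialize (H0 t ltac:(lra)). simpl in H0. lra.
Qed.


Theorem lemma7 (m : nat) (h : R) (k : nat -> Z)
  (hm : (2 <= m)%nat) (hh : 0 < h < 2 ^ m) (hk : k 0%nat = 0%Z) :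
  (p7_strictly_convex m (supp_tau m h k) /\
   p7_compact m (supp_tau m h k) /\
   p7_full_dim_in_H m (supp_tau m h k)) /\
  (forall x, supp_tau m h k x -> 0 <= tau m h k x) /\
  p7_strictly_concave_on m (supp_tau m h k) (tau m h k) /\
  p7_continuous_on_H m (tau m h k).
Proof.
  destruct hh as [hh1 hh2].
  split; [split; [|split]|split; [|split]].
  - apply supp_sconvex; assumption.
  - apply supp_compact; assumption.
  - apply full_dim; assumption.
  - apply tau_nonneg; assumption.
  - apply tau_sconc; assumption.
  - apply tau_cont; assumption.
Qed.
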